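(* Let $L(\lambda)\in\mathbb{C}[\lambda]^{m\times n}$ be a matrix pencil. Then $L(\lambda)$ is right invertible over $\mathbb{C}[\lambda]$ if and only if it has no finite eigenvalues and no left minimal indices. Moreover, in that case, there exists a polynomial right inverse of $L(\lambda)$ having degree at most $m-1$.
   Context: A matrix pencil is a polynomial matrix of degree at most $1$. $A(\lambda)\in\mathbb{C}[\lambda]^{m\times n}$ is right invertible over $\mathbb{C}[\lambda]$ if there is a polynomial matrix $A(\lambda)^R\in\mathbb{C}[\lambda]^{n\times m}$ with $A(\lambda)A(\lambda)^R=I_m$; by convention, if $m=0$ the empty $0\times n$ matrix is right invertible with right inverse its $n\times 0$ transpose. The normal rank of $L(\lambda)$ is its rank over the field $\mathbb{C}(\lambda)$; $\lambda_0\in\mathbb{C}$ is a finite eigenvalue if $\operatorname{rank}_{\mathbb{C}}L(\lambda_0)$ is less than the normal rank. The left null space is $\{y(\lambda)\in\mathbb{C}(\lambda)^m: y(\lambda)^*L(\lambda)=0\}$; the left minimal indices are the column degrees of a minimal polynomial basis of it (a polynomial basis with minimal sum of column degrees), so $L$ has no left minimal indices iff its left null space is $\{0\}$. *)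

(* Defs.v *)
From HB Require Import structures.
From mathcomp Require Import all_boot all_order all_algebra.
From mathcomp Require Import complex.
From mathcomp Require Import reals.
Set Implicit Arguments. Unset Strict Implicit. Unset Printing Implicit Defensive.
Import Order.TTheory GRing.Theory Num.Theory.
Local Open Scope ring_scope.

Definition pencil_to_frac (F : fieldType) (m n : nat) (L : 'M[{poly F}]_(m, n))
  : 'M[{fraction {poly F}}]_(m, n) := map_mx (@tofrac _) L.

Definition is_pencil (F : fieldType) (m n : nat) (L : 'M[{poly F}]_(m, n)) : Prop :=
  forall i j, (size (L i j) <= 2)%N.

Definition right_invertible (F : fieldType) (m n : nat) (L : 'M[{poly F}]_(m, n)) : Prop :=
  exists LR : 'M[{poly F}]_(n, m), L *m LR = 1%:M.

Definition normal_rank (F : fieldType) (m n : nat) (L : 'M[{poly F}]_(m, n)) : nat :=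
  \rank (pencil_to_frac L).

Definition finite_eigenvalue (F : fieldType) (m n : nat) (L : 'M[{poly F}]_(m, n)) (l0 : F) : Prop :=
  (\rank (map_mx (fun p => p.[l0]) L) < normal_rank L)%N.

Definition no_left_minimal_indices (F : fieldType) (m n : nat) (L : 'M[{poly F}]_(m, n)) : Prop :=
  forall y : 'rV[{fraction {poly F}}]_m, y *m pencil_to_frac L = 0 -> y = 0.

Definition mx_deg_le (F : fieldType) (m n : nat) (A : 'M[{poly F}]_(m, n)) (d : nat) : Prop :=
  forall i j, (size (A i j) <= d.+1)%N.

(* Main.v *)
Require Import Defs.
From HB Require Import structures.
From mathcomp Require Import all_boot all_order all_algebra.
From mathcomp Require Import complex.
From mathcomp Require Import reals.
Set Implicit Arguments. Unset Strict Implicit. Unset Printing Implicit Defensive.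
Import Order.TTheory GRing.Theory Num.Theory.
Local Open Scope ring_scope.
Section Chain.
Variables (F : fieldType) (n m : nat) (P Q : 'M[F]_(n,m)).
Definition Lt : 'M[{poly F}]_(n,m) := map_mx polyC P + 'X *: map_mx polyC Q.
Fixpoint Nk k : 'M[F]_n := if k is k'.+1 then kermx (Q *m cokermx (Nk k' *m P)) else 0.

Lemma NkS k r (y : 'M_(r,n)) : (y <= Nk k.+1)%MS = (y *m Q <= Nk k *m P)%MS.
Proof. by rewrite /= sub_kermx mulmxA -submxE. Qed.

Lemma decomp (p : {poly F}) : p = (p`_0)%:P + 'X * drop_poly 1 p.
Proof.
apply/polyP => i; rewrite coefD coefC coefXM coef_drop_poly.
by case: i => [|i] /=; rewrite ?addr0 ?add0r ?addn1.
Qed.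

Lemma constX_eq (a c : F) (p : {poly F}) : a%:P + 'X * p = c%:P -> a = c /\ p = 0.
Proof.
move=> E; have ac : a = c.
  by move: (congr1 (fun q : {poly F} => q`_0) E); rewrite /= coefD coefC coefXM coefC /= addr0.
split=> //; subst; move/eqP: E; rewrite -{2}[c%:P]addr0 (inj_eq (addrI _)) mulf_eq0.
by rewrite polyX_eq0 /= => /eqP.
Qed.

Lemma constX_mx r (A C : 'M[F]_(r,m)) (M : 'M[{poly F}]_(r,m)) :
  map_mx polyC A + 'X *: M = map_mx polyC C -> A = C /\ M = 0.
Proof.
move=> E; split; apply/matrixP => i j; move/matrixP: E => /(_ i j); rewrite !mxE;
  by case/constX_eq.
Qed.

Lemma Lt_mul r (A : 'M[F]_(r,n)) (B : 'M[{poly F}]_(r,n)) :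
  (map_mx polyC A + 'X *: B) *m Lt =
  map_mx polyC (A *m P) + 'X *: (map_mx polyC (A *m Q) + B *m Lt).
Proof.
rewrite mulmxDl /Lt mulmxDr -scalemxAr -!map_mxM -scalemxAl scalerDr addrA.
by [].
Qed.

Lemma chain_ex k r (C : 'M[F]_(r,m)) : (C <= Nk k *m P)%MS ->
  exists W : 'M[{poly F}]_(r,n), (forall i j, (size (W i j) <= k)%N) /\
     W *m Lt = map_mx polyC C.
Proof.
elim: k r C => [|k IH] r C.
  rewrite /= mul0mx => /submx0null ->; exists 0; split => [i j|].
    by rewrite mxE size_poly0.
  by rewrite mul0mx map_mx0.
case/submxP => D ->; set Z := D *m Nk k.+1.
have hZ : (- (Z *m Q) <= Nk k *m P)%MS by rewrite eqmx_opp -NkS submxMl.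
case: (IH _ _ hZ) => W [sW eW].
exists (map_mx polyC Z + 'X *: W); split.
  move=> i j; rewrite !mxE; apply: leq_trans (size_polyD _ _) _.
  rewrite geq_max (leq_trans (size_polyC_leq1 _)) //.
  apply: leq_trans (size_polyMleq _ _) _; by rewrite size_polyX addSn /= add1n ltnS sW.
by rewrite Lt_mul eW map_mxN addrN scaler0 addr0 mulmxA.
Qed.

Lemma chain_sub k r (C : 'M[F]_(r,m)) (W : 'M[{poly F}]_(r,n)) :
  (forall i j, (size (W i j) <= k)%N) -> W *m Lt = map_mx polyC C ->
  (C <= Nk k *m P)%MS.
Proof.
elim: k r C W => [|k IH] r C W sW eW.
  have W0 : W = 0.
    by apply/matrixP => i j; rewrite mxE; apply/eqP; rewrite -size_poly_leq0 sW.
  have -> : C = 0.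
    apply/matrixP => i j; move/matrixP: eW => /(_ i j).
    by rewrite W0 mul0mx !mxE => /esym/eqP; rewrite polyC_eq0 => /eqP.
  by rewrite sub0mx.
pose W0 := map_mx (fun p : {poly F} => p`_0) W.
pose W1 := map_mx (drop_poly 1) W.
have dW : W = map_mx polyC W0 + 'X *: W1.
  by apply/matrixP => i j; rewrite !mxE -decomp.
have sW1 : forall i j, (size (W1 i j) <= k)%N.
  by move=> i j; rewrite mxE size_drop_poly leq_subLR add1n.
move: eW; rewrite dW Lt_mul => /constX_mx [e1 e2].
have e3 : W1 *m Lt = map_mx polyC (- (W0 *m Q)).
  by rewrite map_mxN; apply/eqP; rewrite -addr_eq0 addrC e2.
have := IH _ _ _ sW1 e3; rewrite eqmx_opp -NkS => h.
by rewrite -e1 submxMr.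
Qed.

Lemma Nk_mono k : (Nk k <= Nk k.+1)%MS.
Proof.
elim: k => [|k IH]; first by rewrite sub0mx.
rewrite NkS; apply: submx_trans (submxMr P IH).
by rewrite -NkS submx_refl.
Qed.

Lemma NP_mono j k : (j <= k)%N -> (Nk j *m P <= Nk k *m P)%MS.
Proof.
move/subnK <-; elim: (k - j)%N => [|d IH]; first by rewrite add0n.
by apply: submx_trans IH _; rewrite addSn submxMr // Nk_mono.
Qed.

Lemma stable k : (Nk k.+1 *m P <= Nk k *m P)%MS ->
  forall d, (Nk (d + k) *m P <= Nk k *m P)%MS.
Proof.
move=> h.
have st : forall d, (Nk (d + k).+1 *m P <= Nk (d + k) *m P)%MS.
  elim=> [|d IH] //; rewrite submxMr // addSn NkS.
  apply: submx_trans IH; by rewrite -NkS.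
elim=> [|d IH]; first by rewrite add0n.
by apply: submx_trans IH; rewrite addSn.
Qed.

Lemma grow k : (k <= \rank (Nk k *m P))%N \/
  exists2 j, (j < k)%N & (Nk j.+1 *m P <= Nk j *m P)%MS.
Proof.
elim: k => [|k [IH|[j jk sj]]]; [by left | | by right; exists j => //; apply: ltnW].
case: (boolP (Nk k.+1 *m P <= Nk k *m P)%MS) => h; first by right; exists k.
left; have : (Nk k *m P < Nk k.+1 *m P)%MS by rewrite ltmxE NP_mono ?leqnSn.
by move/rank_ltmx; apply: leq_ltn_trans.
Qed.

Lemma reduce D : ((1%:M : 'M_m) <= Nk D *m P)%MS -> ((1%:M : 'M_m) <= Nk m *m P)%MS.
Proof.
move=> h; case: (grow m) => [g | [j jm sj]].
  by apply: submx_full; rewrite /row_full eqn_leq rank_leq_col g.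
apply: submx_trans (NP_mono (ltnW jm)); apply: submx_trans h _.
case: (leqP D j) => Dj; first exact: NP_mono.
by rewrite -(subnK (ltnW Dj)); apply: stable.
Qed.

End Chain.

Section Bezout.
Variables (F : closedFieldType) (I : finType) (d : I -> {poly F}).

Lemma bezout_fin : (forall x, exists i, (d i).[x] != 0) ->
  exists c : I -> {poly F}, \sum_i c i * d i = 1.
Proof.
move=> H.
pose inI h := exists c : I -> {poly F}, h = \sum_i c i * d i.
have gen : forall s : seq I, exists2 h, inI h & h %= \big[@gcdp F/0]_(j <- s) d j.
  elim=> [|a s [h [c hc] eh]].
    exists 0; last by rewrite big_nil eqpxx.
    by exists (fun _ => 0); rewrite big1 // => i _; rewrite mul0r.
  pose e := egcdp (d a) h.
  exists (e.1 * d a + e.2 * h).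
    exists (fun i => e.1 * (i == a)%:R + e.2 * c i).
    rewrite (eq_bigr (fun i => e.1 * ((i == a)%:R * d i) + e.2 * (c i * d i))); last first.
      by move=> i _; rewrite mulrDl !mulrA.
    rewrite big_split -!mulr_sumr hc; congr (_ * _ + _).
    rewrite (bigD1 a) //= eqxx mul1r big1 ?addr0 // => i /negPf ->.
    by rewrite mul0r.
  rewrite big_cons; apply: eqp_trans (eqp_gcdr _ eh); rewrite eqp_sym; exact: egcdpE.
have [h [c hc] eh] := gen (enum I).
have dv : forall j, h %| d j.
  move=> j; rewrite (eqp_dvdl _ eh); have : j \in enum I by rewrite mem_enum.
  elim: (enum I) => // a s IHs; rewrite inE big_cons => /orP [/eqP -> | js].
    exact: dvdp_gcdl.
  exact: dvdp_trans (dvdp_gcdr _ _) (IHs js).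
have s1 : size h == 1.
  apply/negPn/negP => /closed_rootP [x rx]; have [i hi] := H x.
  by move: hi; have := root_dvdp (dv i) rx; rewrite rootE => ->.
case/size_poly1P: s1 => c0 c0n0 hE.
exists (fun i => c0^-1%:P * c i).
rewrite (eq_bigr (fun i => c0^-1%:P * (c i * d i))) => [|i _]; last by rewrite mulrA.
by rewrite -mulr_sumr -hc hE -polyCM mulVf.
Qed.
End Bezout.

Section Minors.
Variables (F : fieldType) (m n : nat).

Definition Ef (f : 'I_n ^ m) : 'M[{poly F}]_(n,m) := \matrix_(j,i) (f i == j)%:R.

Lemma mulEf (A : 'M[{poly F}]_(m,n)) f : A *m Ef f = colsub f A.
Proof.
apply/matrixP => i k; rewrite !mxE (bigD1 (f k)) //= mxE eqxx mulr1 big1 ?addr0 //.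
by move=> j jn; rewrite mxE eq_sym (negPf jn) mulr0.
Qed.

Lemma rinv_of_bezout (L : 'M[{poly F}]_(m,n)) (c : 'I_n ^ m -> {poly F}) :
  \sum_f c f * \det (colsub f L) = 1 ->
  L *m (\sum_f c f *: (Ef f *m \adj (colsub f L))) = 1%:M.
Proof.
move=> hc; rewrite mulmx_sumr.
rewrite (eq_bigr (fun f => (c f * \det (colsub f L))%:M)); last first.
  by move=> f _; rewrite -scalemxAr mulmxA mulEf mul_mx_adj scale_scalar_mx.
by rewrite -hc raddf_sum.
Qed.

Lemma minor_nz (E : 'M[F]_(m,n)) : \rank E = m ->
  exists f : 'I_n ^ m, \det (colsub f E) != 0.
Proof.
move=> rE; have rf : row_full E^T by rewrite /row_full mxrank_tr rE.
exists (fullrankfun rf); have := fullrowsub_unit rf; rewrite unitmxE unitfE.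
rewrite -det_tr; congr (\det _ != 0); by apply/matrixP => i j; rewrite !mxE.
Qed.

Lemma eval_minor (L : 'M[{poly F}]_(m,n)) x f :
  (\det (colsub f L)).[x] = \det (colsub f (map_mx (fun p => p.[x]) L)).
Proof.
transitivity (horner_eval x (\det (colsub f L))); first by [].
by rewrite -det_map_mx; congr (\det _); apply/matrixP => i j; rewrite !mxE.
Qed.

Lemma pencil_entry (p : {poly F}) : (size p <= 2)%N -> p = (p`_0)%:P + 'X * (p`_1)%:P.
Proof.
move=> sp; apply/polyP => i; rewrite coefD coefC coefXM coefC.
case: i => [|[|i]] /=; rewrite ?addr0 ?add0r //.
by rewrite nth_default // (leq_trans sp).
Qed.

End Minors.

Lemma normal_rank_full (F : fieldType) (m n : nat) (L : 'M[{poly F}]_(m, n)) :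
  no_left_minimal_indices L -> normal_rank L = m.
Proof.
move=> H; have K0 : kermx (pencil_to_frac L) = 0.
  by apply/row_matrixP => i; rewrite row0; apply: H; rewrite -row_mul mulmx_ker row0.
have := mxrank_ker (pencil_to_frac L); rewrite K0 mxrank0 => /esym/eqP.
rewrite subn_eq0 => h; apply/eqP; rewrite eqn_leq rank_leq_row; exact: h.
Qed.

Theorem lemma5p2 (R : realType) (m n : nat) (L : 'M[{poly R[i]}]_(m, n)) :
  is_pencil L ->
  (right_invertible L <->
     ((forall l0 : R[i], ~ finite_eigenvalue L l0) /\ no_left_minimal_indices L))
  /\ (right_invertible L ->
      exists LR : 'M[{poly R[i]}]_(n, m), L *m LR = 1%:M /\ mx_deg_le LR m.-1).

Proof.
move=> Hp.
have part2 : right_invertible L ->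
    exists LR : 'M[{poly R[i]}]_(n, m), L *m LR = 1%:M /\ mx_deg_le LR m.-1.
  case=> X HX.
  pose P := (map_mx (fun p : {poly R[i]} => p`_0) L)^T.
  pose Q := (map_mx (fun p : {poly R[i]} => p`_1) L)^T.
  have LtE : L^T = Lt P Q.
    by apply/matrixP => i j; rewrite !mxE; apply: pencil_entry; apply: Hp.
  have e1 : X^T *m Lt P Q = map_mx polyC 1%:M.
    by rewrite -LtE -trmx_mul HX trmx1 map_mx1.
  have [D hD] : exists D, forall i j, (size (X^T i j) <= D)%N.
    exists (\max_(ij : 'I_m * 'I_n) size (X^T ij.1 ij.2))%N => i j.
    exact: (leq_bigmax (i, j)).
  have := reduce (chain_sub hD e1); case/chain_ex => W [sW eW].
  exists W^T; split.
    by rewrite -[L]trmxK -trmx_mul LtE eW map_mx1 trmx1.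
  by move=> i j; rewrite mxE; apply: leq_trans (sW j i) _; apply: leqSpred.
split; last exact: part2.
split.
  case=> X HX; split.
    move=> l0; rewrite /finite_eigenvalue /normal_rank.
    have E1 : map_mx (fun p => p.[l0]) L *m map_mx (fun p => p.[l0]) X = 1%:M.
      change (map_mx (horner_eval l0) L *m map_mx (horner_eval l0) X = 1%:M).
      by rewrite -map_mxM HX map_mx1.
    have := mxrankM_maxl (map_mx (fun p => p.[l0]) L) (map_mx (fun p => p.[l0]) X).
    rewrite E1 mxrank1 => h1 h2.
    have := leq_trans h2 (rank_leq_row _); rewrite ltnNge h1 //.
  move=> y hy.
  have E1 : pencil_to_frac L *m map_mx (@tofrac _) X = 1%:M.
    by rewrite /pencil_to_frac -map_mxM HX map_mx1.
  by rewrite -[y]mulmx1 -E1 mulmxA hy mul0mx.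
case=> He Hl.
have nr := normal_rank_full Hl.
have Hx : forall x : R[i], exists f : 'I_n ^ m, (\det (colsub f L)).[x] != 0.
  move=> x; have rE : \rank (map_mx (fun p => p.[x]) L) = m.
    apply/eqP; rewrite eqn_leq rank_leq_row /=.
    by move: (He x); rewrite /finite_eigenvalue nr => /negP; rewrite -leqNgt.
  by have [f hf] := minor_nz rE; exists f; rewrite eval_minor.
have [c hc] := bezout_fin Hx.
by exists (\sum_f c f *: (@Ef _ m n f *m \adj (colsub f L))); apply: rinv_of_bezout.
Qed.
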